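(* Let $0<\epsilon\le0.66$ and let $a,b,c\in\mathbb R^d$ be distinct points such that $(a,b,c)$ is compatible (with respect to $\epsilon$) and $0.6231\,\frac{d(c,b)}{d(a,b)}\le1$. Then $$\angle abc>51.45^\circ+\arccos\!\left(0.6231\,\frac{d(c,b)}{d(a,b)}\right).$$ In particular, $\angle abc>102.9^\circ$.
   Context: $d(x,y)$ is Euclidean distance in $\mathbb R^d$ ($d\ge2$) and $B_x(r)$ is the closed ball of radius $r$ about $x$. For $a\ne b$, $X(a,b)$ is the set of $x\in\mathbb R^d$ with $d(x,a)=d(x,b)=\frac{d(a,b)}{\epsilon\sqrt{4-\epsilon^2}}$. A triple $(a,b,c)$ is compatible if $c\notin B_x(d(x,b))$ for all $x\in X(a,b)$ and $a\notin B_y(d(y,b))$ for all $y\in X(b,c)$. Angles are measured in degrees in $[0^\circ,180^\circ]$. *)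

(* Defs.v *)
From HB Require Import structures.
From mathcomp Require Import all_boot all_order all_algebra.
From mathcomp Require Import all_classical all_reals all_analysis.
Set Implicit Arguments. Unset Strict Implicit. Unset Printing Implicit Defensive.
Import Order.TTheory GRing.Theory Num.Theory.
Local Open Scope ring_scope.

Definition dist {R : realType} {d : nat} (x y : 'rV[R]_d) : R :=
  Num.sqrt (\sum_(i < d) (x ord0 i - y ord0 i) ^+ 2).

Definition dotp {R : realType} {d : nat} (x y : 'rV[R]_d) : R :=
  \sum_(i < d) x ord0 i * y ord0 i.

Definition cball {R : realType} {d : nat} (x : 'rV[R]_d) (r : R) : set 'rV[R]_d :=
  [set z | dist x z <= r].

Definition Xset {R : realType} {d : nat} (eps : R) (a b : 'rV[R]_d) : set 'rV[R]_d :=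
  [set x | dist x a = dist a b / (eps * Num.sqrt (4 - eps ^+ 2)) /\
           dist x b = dist a b / (eps * Num.sqrt (4 - eps ^+ 2))].

Definition compatible {R : realType} {d : nat} (eps : R) (a b c : 'rV[R]_d) : Prop :=
  (forall x, Xset eps a b x -> ~ cball x (dist x b) c) /\
  (forall y, Xset eps b c y -> ~ cball y (dist y b) a).

Definition angle_rad {R : realType} {d : nat} (a b c : 'rV[R]_d) : R :=
  acos (dotp (a - b) (c - b) / (dist a b * dist c b)).

Definition deg {R : realType} (t : R) : R := t * pi / 180%:R.

(* Main.v *)
From HB Require Import structures.
From mathcomp Require Import all_boot all_order all_algebra.
From mathcomp Require Import all_classical all_reals all_analysis.
From mathcomp Require Import ring lra.
Import Order.TTheory GRing.Theory Num.Theory.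
Local Open Scope ring_scope.
Require Import Defs.

Section TaylorSec.
Import numFieldNormedType.Exports.
Section Taylor.
Variable R : realType.

Lemma cc_pair (x : R) j : cos_coeff' x j + cos_coeff' x j.+1 =
  (-1) ^+ j * (x ^+ j.*2 / (j.*2)`!%:R - x ^+ j.*2 * x ^+ 2 / ((j.*2.+2) * (j.*2.+1) * (j.*2)`!)%:R).
Proof. idtac.
rewrite /cos_coeff' -!exprnP exprS doubleS !factS -exprD addn2 !mulnA.
ring.
Qed.

Lemma pair_pos (x : R) j : 0 < x <= 2 -> (0 < j)%N ->
  0 < x ^+ j.*2 / (j.*2)`!%:R - x ^+ j.*2 * x ^+ 2 / ((j.*2.+2) * (j.*2.+1) * (j.*2)`!)%:R.
Proof. idtac.
move=> /andP[x0 x2] j0.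
have M12 : 12%:R <= ((j.*2.+2) * (j.*2.+1))%:R :> R.
  rewrite ler_nat; case: j j0 => // j _; rewrite doubleS.
  by apply: (@leq_mul 4 3) .
have F0 : 0 < (j.*2)`!%:R :> R by rewrite ltr0n fact_gt0.
have y0 : 0 < x ^+ j.*2 by rewrite exprn_gt0.
rewrite natrM.
set y := x ^+ j.*2; set F := (j.*2)`!%:R; set M := ((j.*2.+2)*(j.*2.+1))%:R.
have M0 : 0 < M by apply: lt_le_trans M12; rewrite ltr0n.
have -> : y / F - y * x ^+ 2 / (M * F) = (y / F) * ((M - x ^+ 2) / M).
  field; have h := ler0n R j.*2; rewrite (gt_eqF F0) !gt_eqF //; lra.
apply: mulr_gt0; first by rewrite divr_gt0.
apply: divr_gt0 => //; rewrite subr_gt0; apply: lt_le_trans M12; nra.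
Qed.

Lemma cos_lb (x : R) n : 0 < x <= 2 ->
  \sum_(0 <= i < n.*2.+2) cos_coeff' x i < cos x.
Proof. idtac.
move=> hx.
have h := @cvg_cos_coeff' R x; rewrite -(cvg_lim (@Rhausdorff R) h).
apply: lt_sum_lim_series; first by move/cvgP in h.
move=> d; rewrite addnS cc_pair -signr_odd oddD !odd_double /= odd_double /= expr0 mul1r.
by apply: pair_pos => //; rewrite addnS.
Qed.

Lemma cos_ub (x : R) n : 0 < x <= 2 ->
  cos x < \sum_(0 <= i < n.*2.+1) cos_coeff' x i.
Proof. idtac.
move=> hx.
have /cvgN h := @cvg_cos_coeff' R x.
rewrite -ltrN2 -(cvg_lim (@Rhausdorff R) h) -sumrN -seriesN.
apply: lt_sum_lim_series; first by move/cvgP in h; rewrite seriesN.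
move=> d; rewrite addnS -opprD cc_pair -signr_odd oddD !odd_double /= odd_double /= expr1.
by rewrite mulN1r opprK; apply: pair_pos => //; rewrite addnS.
Qed.

Lemma cos_8981 : 6230862%:R / 10000000%:R < cos (8981%:R / 10000%:R : R).
Proof. idtac.
apply: (@lt_trans _ _ (\sum_(0 <= i < 4) cos_coeff' (8981%:R / 10000%:R : R) i)); last first.
  by apply: (cos_lb _ 1); apply/andP; split; lra.
rewrite !big_nat_recl // big_geq // /cos_coeff' -!exprnP.
rewrite !factS fact0; lra.
Qed.

Lemma cos_1571 : cos (1571%:R / 1000%:R : R) < 0.
Proof.
apply: (@lt_trans _ _ (\sum_(0 <= i < 5) cos_coeff' (1571%:R / 1000%:R : R) i)).
  by apply: (cos_ub _ 2); apply/andP; split; lra.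
rewrite !big_nat_recl // big_geq // /cos_coeff' -!exprnP.
rewrite !factS fact0; lra.
Qed.

Lemma pi_ub : pi < 3142%:R / 1000%:R :> R.
Proof.
have h : pi / 2 < 1571%:R / 1000%:R :> R.
  rewrite ltNge; apply/negP => hle.
  have : cos (pi / 2) <= cos (1571%:R / 1000%:R : R).
    rewrite leNgt ltr_cos ?in_itv /= -?leNgt //.
      by apply/andP; split; [lra| have := pi_ge2 R; lra].
    by apply/andP; split; [have := pi_ge0 R; lra| have := pi_ge0 R; lra].
  rewrite cos_pihalf; have := cos_1571; lra.
lra.
Qed.
End Taylor.

End TaylorSec.

Lemma lt_cosE (R : realType) (x y : R) : 0 <= x <= pi -> 0 <= y <= pi ->
  (cos x < cos y) = (y < x).
Proof. by move=> hx hy; rewrite ltr_cos ?in_itv. Qed.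

Lemma trig_final (R : realType) (C t k : R) : -1 <= C <= 1 -> 0 < t -> 0 < k ->
  k <= 6231%:R/10000%:R -> k < 6230862%:R / 10000000%:R ->
  (6231%:R / 10000%:R) * t <= 1 ->
  k * C + Num.sqrt (1 - k^+2) * Num.sqrt (1 - C^+2) < k * t ->
  k * C + Num.sqrt (1 - k^+2) * Num.sqrt (1 - C^+2) < k / t ->
  deg (5145%:R / 100%:R) + acos (6231%:R / 10000%:R * t) < acos C /\
  deg (1029%:R / 10%:R) < acos C.
Proof.
move=> hC t0 k0 km kc hw h1 h2.
have hpi := pi_ub R; have hpi2 := pi_ge2 R.
have hk : -1 <= k <= 1 by apply/andP; split; lra.
have hA0 := acos_ge0 hC; have hApi := acos_lepi hC.
have hth0 := acos_ge0 hk; have hthpi := acos_lepi hk.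
have cA : cos (acos C) = C by rewrite acosK // in_itv.
have sA : sin (acos C) = Num.sqrt (1 - C^+2) by rewrite sin_acos.
have cth : cos (acos k) = k by rewrite acosK // in_itv.
have sth : sin (acos k) = Num.sqrt (1 - k^+2) by rewrite sin_acos.
set A := acos C in hA0 hApi cA sA *; set th := acos k in hth0 hthpi cth sth *.
have hQ : cos (A - th) = k * C + Num.sqrt (1 - k^+2) * Num.sqrt (1 - C^+2).
  by rewrite cosB cA cth sA sth; ring.
have hQk : cos (A - th) < k.
  rewrite hQ; case: (leP t 1) => ht.
    by apply: (lt_le_trans h1); apply: ler_piMr => //; exact: ltW.
  apply: (lt_le_trans h2); rewrite ler_pdivrMr //; apply: ler_peMr; exact: ltW.
have hth : 8981%:R / 10000%:R < th.
  rewrite -(@lt_cosE R th); first by rewrite cth; have := cos_8981 R; lra.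
    by apply/andP; split => //.
  by apply/andP; split; lra.
have hthA : th <= A.
  rewrite leNgt; apply/negP => hlt.
  have : cos (th - A) < cos th by rewrite -opprB cosN cth.
  rewrite lt_cosE; first by lra.
    by apply/andP; split; lra.
  by apply/andP; split; lra.
have hdeg1 : deg (5145%:R / 100%:R) < th by rewrite /deg; lra.
split.
  set w := 6231%:R / 10000%:R * t.
  have hw1 : -1 <= w <= 1 by apply/andP; split; rewrite /w; lra.
  have hacw : acos w < A - th.
    rewrite -(@lt_cosE R (A - th)).
    - rewrite acosK; last by rewrite in_itv /=; exact: hw1.
      rewrite hQ; apply: (lt_le_trans h1); rewrite /w ler_pM2r; [exact: km | exact: t0].
    - by apply/andP; split; lra.
    - by apply/andP; split; [exact: acos_ge0 | exact: acos_lepi].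
  lra.
have : th < A - th.
  rewrite -(@lt_cosE R (A - th)); first by rewrite cth.
    by apply/andP; split; lra.
  by apply/andP; split; lra.
rewrite /deg; lra.
Qed.

Section Vec.
Variables (R : realType) (d : nat).
Implicit Types (u v w x y z : 'rV[R]_d).

Lemma dotpC u v : dotp u v = dotp v u.
Proof. by apply: eq_bigr => i _; rewrite mulrC. Qed.

Lemma dotpDl u v w : dotp (u + v) w = dotp u w + dotp v w.
Proof. by rewrite /dotp -big_split; apply: eq_bigr => i _; rewrite mxE mulrDl. Qed.

Lemma dotpNl u v : dotp (- u) v = - dotp u v.
Proof. by rewrite /dotp -sumrN; apply: eq_bigr => i _; rewrite mxE mulNr. Qed.

Lemma dotpZl (a : R) u v : dotp (a *: u) v = a * dotp u v.
Proof. by rewrite /dotp mulr_sumr; apply: eq_bigr => i _; rewrite mxE mulrA. Qed.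

Lemma dotpBl u v w : dotp (u - v) w = dotp u w - dotp v w.
Proof. by rewrite dotpDl dotpNl. Qed.

Lemma dotpDr u v w : dotp w (u + v) = dotp w u + dotp w v.
Proof. by rewrite dotpC dotpDl !(dotpC w). Qed.

Lemma dotpBr u v w : dotp w (u - v) = dotp w u - dotp w v.
Proof. by rewrite dotpC dotpBl !(dotpC w). Qed.

Lemma dotpZr (a : R) u v : dotp v (a *: u) = a * dotp v u.
Proof. by rewrite dotpC dotpZl dotpC. Qed.

Lemma dotp_ge0 u : 0 <= dotp u u.
Proof. by apply: sumr_ge0 => i _; rewrite -expr2 sqr_ge0. Qed.

Lemma dotp_eq0 u : dotp u u = 0 -> u = 0.
Proof.
move=> /eqP; rewrite psumr_eq0; last by move=> i _; rewrite -expr2 sqr_ge0.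
move=> /allP h; apply/rowP => i; rewrite mxE.
have := h i (mem_index_enum i); rewrite -expr2 sqrf_eq0 /= => /eqP <-; congr (u _ i); exact: val_inj.

Qed.

Lemma distE x y : dist x y = Num.sqrt (dotp (x - y) (x - y)).
Proof. by congr Num.sqrt; apply: eq_bigr => i _; rewrite !mxE expr2. Qed.

Lemma distC x y : dist x y = dist y x.
Proof. by rewrite !distE -opprB dotpNl dotpC dotpNl opprK. Qed.

Lemma sqr_dist x y : dist x y ^+ 2 = dotp (x - y) (x - y).
Proof. by rewrite distE sqr_sqrtr // dotp_ge0. Qed.

Lemma dist_ge0 x y : 0 <= dist x y.
Proof. by rewrite distE sqrtr_ge0. Qed.

Lemma dotp_gt0 u : u != 0 -> 0 < dotp u u.
Proof.
move=> h; rewrite lt_neqAle dotp_ge0 andbT eq_sym; apply/eqP => /dotp_eq0.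
by apply/eqP.
Qed.

Lemma dist_gt0 x y : x != y -> 0 < dist x y.
Proof. by move=> h; rewrite distE sqrtr_gt0 dotp_gt0 // subr_eq0. Qed.

Definition ev (i : 'I_d) : 'rV[R]_d := \row_j ((j == i)%:R).

Lemma dotp_ev i w : dotp (ev i) w = w ord0 i.
Proof.
rewrite /dotp (bigD1 i) //= mxE eqxx mul1r big1 ?addr0 // => j /negbTE hj.
by rewrite mxE hj mul0r.
Qed.

Lemma perp_nz (hd : (2 <= d)%N) u : exists z, 0 < dotp z z /\ dotp z u = 0.
Proof.
have h0 : (0 < d)%N by apply: leq_trans hd.
pose i0 := Ordinal h0; pose i1 := Ordinal hd.
have hne : (i1 == i0) = false by [].
have hne' : (i0 == i1) = false by [].
case: (eqVneq (u ord0 i0 ^+ 2 + u ord0 i1 ^+ 2) 0) => h.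
  have hu0 : u ord0 i0 = 0.
    apply/eqP; rewrite -sqrf_eq0 eq_le sqr_ge0 andbT.
    by rewrite -h lerDl sqr_ge0.
  exists (ev i0); rewrite !dotp_ev hu0 mxE eqxx; split => //; exact: ltr01.
have hp : 0 < u ord0 i0 ^+ 2 + u ord0 i1 ^+ 2.
  by rewrite lt_neqAle eq_sym h /= addr_ge0 ?sqr_ge0.
exists (u ord0 i1 *: ev i0 - u ord0 i0 *: ev i1).
rewrite !dotpBl !dotpZl !dotp_ev !mxE !eqxx hne hne'; split; last by ring.
have -> : (true%:R : R) = 1 by []. have -> : (false%:R : R) = 0 by []. nra.
Qed.


Lemma normalize z : 0 < dotp z z ->
  dotp ((Num.sqrt (dotp z z))^-1 *: z) ((Num.sqrt (dotp z z))^-1 *: z) = 1.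
Proof.
move=> hz; rewrite dotpZl dotpZr.
have hs : 0 < Num.sqrt (dotp z z) by rewrite sqrtr_gt0.
have hs2 := sqr_sqrtr (ltW hz).
rewrite -{3}hs2; field; exact: lt0r_neq0.
Qed.

Lemma perp_pp u v : 0 < dotp u u ->
  dotp (v - (dotp u v / dotp u u) *: u) (v - (dotp u v / dotp u u) *: u) =
  dotp v v - dotp u v ^+ 2 / dotp u u.
Proof.
move=> hu; rewrite !dotpBl !dotpBr !dotpZl !dotpZr (dotpC v u).
by field; exact: lt0r_neq0.
Qed.

Lemma cauchy_schwarz u v : 0 < dotp u u -> dotp u v ^+ 2 <= dotp u u * dotp v v.
Proof.
move=> hu; have := dotp_ge0 (v - (dotp u v / dotp u u) *: u).
rewrite perp_pp // subr_ge0 ler_pdivrMr // => h; nra.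
Qed.

Lemma perp_unit (hd : (2 <= d)%N) u v : 0 < dotp u u -> exists e,
  [/\ dotp e e = 1, dotp e u = 0 & dotp e v = Num.sqrt (dotp v v - dotp u v ^+ 2 / dotp u u)].
Proof.
move=> hu; set l := dotp u v / dotp u u; set p := v - l *: u.
have pu : dotp p u = 0.
  rewrite /p /l dotpBl dotpZl (dotpC v u); field; exact: lt0r_neq0.
have pv : dotp p v = dotp p p by rewrite {3}/p dotpBr dotpZr pu mulr0 subr0.
have pp := @perp_pp u v hu; rewrite -/l -/p in pp; rewrite -pp.
case: (eqVneq (dotp p p) 0) => h.
  have [z [hz zu]] := perp_nz hd u.
  exists ((Num.sqrt (dotp z z))^-1 *: z); split; first exact: normalize.
    by rewrite dotpZl zu mulr0.
  have p0 := @dotp_eq0 p h; have -> : v = l *: u by apply/eqP; rewrite -subr_eq0 -/p p0.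
  by rewrite h sqrtr0 dotpZr dotpZl zu !mulr0.
have hp : 0 < dotp p p by rewrite lt_neqAle eq_sym h dotp_ge0.
exists ((Num.sqrt (dotp p p))^-1 *: p); split; first exact: normalize.
  by rewrite dotpZl pu mulr0.
rewrite dotpZl pv.
have hs : 0 < Num.sqrt (dotp p p) by rewrite sqrtr_gt0.
have hs2 := sqr_sqrtr (ltW hp).
set s := Num.sqrt (dotp p p) in hs hs2 *.
rewrite -hs2; field; exact: lt0r_neq0.
Qed.

Lemma geomG (hd : (2 <= d)%N) (a b c : 'rV[R]_d) (r : R) : a != b -> dist a b / 2 <= r ->
  (forall x, dist x a = r -> dist x b = r -> r < dist x c) ->
  dotp (a - b) (c - b) + 2 * Num.sqrt (r ^+ 2 - dist a b ^+ 2 / 4) *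
    Num.sqrt (dotp (c - b) (c - b) - dotp (a - b) (c - b) ^+ 2 / dotp (a - b) (a - b))
  < dotp (c - b) (c - b).
Proof.
move=> hab hr H.
have hL := sqr_dist a b; have hL0 := dist_ge0 a b.
have r0 : 0 <= r by apply: le_trans hr; rewrite divr_ge0.
have hb2 : 0 <= r ^+ 2 - dist a b ^+ 2 / 4 by nra.
rewrite hL in hb2 *.
set u := a - b in hL hb2 *; set v := c - b.
have hu : 0 < dotp u u by apply: dotp_gt0; rewrite subr_eq0.
have [e [ee eu ev]] := perp_unit hd u v hu.
set P := Num.sqrt _ in ev *.
set be := Num.sqrt (r ^+ 2 - dotp u u / 4).
have hbe2 : be ^+ 2 = r ^+ 2 - dotp u u / 4 by rewrite sqr_sqrtr.
set w := 2^-1 *: u + be *: e.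
have xa : (b + w) - a = w - u by apply/rowP => i; rewrite /u !mxE; ring.
have xb : (b + w) - b = w by apply/rowP => i; rewrite !mxE; ring.
have xc : (b + w) - c = w - v by apply/rowP => i; rewrite /v !mxE; ring.
have wu : dotp w u = dotp u u / 2 by rewrite /w dotpDl !dotpZl eu; field.
have ww : dotp w w = r ^+ 2.
  rewrite /w !dotpDl !dotpZl !dotpDr !dotpZr ee eu (dotpC u e) eu.
  rewrite -[r ^+ 2](subrK (dotp u u / 4)) -hbe2; by field.
have wv : dotp w v = dotp u v / 2 + be * P by rewrite /w dotpDl !dotpZl ev; field.
clearbody w u v.
have ha : dist (b + w) a = r.
  rewrite distE xa !dotpBl !dotpBr (dotpC u w) ww wu.
  have -> : r ^+ 2 - dotp u u / 2 - (dotp u u / 2 - dotp u u) = r ^+ 2 by field.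
  by rewrite sqrtr_sqr ger0_norm.
have hb : dist (b + w) b = r by rewrite distE xb ww sqrtr_sqr ger0_norm.
have := H _ ha hb; rewrite distE xc.
have hX : dotp (w - v) (w - v) = r ^+ 2 - 2 * (dotp u v / 2 + be * P) + dotp v v.
  by rewrite !dotpBl !dotpBr (dotpC v w) ww wv; ring.
have X0 := dotp_ge0 (w - v).
move=> hlt.
have : r ^+ 2 < dotp (w - v) (w - v).
  have := sqr_sqrtr X0; set q := Num.sqrt _ in hlt *; nra.
rewrite hX; lra.
Qed.

End Vec.

Lemma sqrt_sqM (R : realType) (x y : R) : 0 <= x -> Num.sqrt (x ^+ 2 * y) = x * Num.sqrt y.
Proof. by move=> hx; rewrite sqrtrM ?sqr_ge0 // sqrtr_sqr ger0_norm. Qed.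

Lemma sq_le (R : realType) (x y : R) : 0 <= x -> 0 <= y -> x ^+ 2 <= y ^+ 2 -> x <= y.
Proof. move=> hx hy h; rewrite leNgt; apply/negP => hlt; nra. Qed.

Lemma sq_lt (R : realType) (x y : R) : 0 <= x -> 0 <= y -> x ^+ 2 < y ^+ 2 -> x < y.
Proof. move=> hx hy h; rewrite ltNge; apply/negP => hlt; nra. Qed.

Lemma sq_le1 (R : realType) (x : R) : x ^+ 2 <= 1 -> -1 <= x <= 1.
Proof. by move=> h; apply/andP; split; nra. Qed.


Lemma kbounds (R : realType) (eps q : R) : 0 < eps -> eps <= 66%:R / 100%:R ->
  q ^+ 2 = 4 - eps ^+ 2 -> 0 < q ->
  [/\ 0 < eps * q / 2, eps * q / 2 <= 6231%:R / 10000%:R,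
      eps * q / 2 < 6230862%:R / 10000000%:R & eps * q / 2 < 1].
Proof.
move=> e0 e1 q2 q0.
have he2 : eps ^+ 2 <= 4356%:R / 10000%:R.
  have := ler_pM (ltW e0) (ltW e0) e1 e1; rewrite -expr2 => h.
  apply: (le_trans h); lra.
set k := eps * q / 2.
have k0 : 0 < k by rewrite /k; apply: divr_gt0 => //; exact: mulr_gt0.
have kk : k ^+ 2 <= 38816316%:R / 100000000%:R.
  have -> : k ^+ 2 = eps ^+ 2 * q ^+ 2 / 4 by rewrite /k; field.
  rewrite q2.
  have : 0 <= (4356%:R / 10000%:R - eps ^+ 2) * (35644%:R / 10000%:R - eps ^+ 2).
    by apply: mulr_ge0; lra.
  lra.
have km : k <= 6231%:R / 10000%:R.
  by apply: sq_le; [exact: ltW| lra| apply: (le_trans kk); lra].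
have kc : k < 6230862%:R / 10000000%:R.
  by apply: sq_lt; [exact: ltW| lra| apply: (le_lt_trans kk); lra].
split; [exact: k0|exact: km|exact: kc|lra].
Qed.

Lemma id1 (R : realType) (L k e : R) : e = 2 * k -> k != 0 ->
  (L / e) ^+ 2 - L ^+ 2 / 4 = (L / (2 * k)) ^+ 2 * (1 - k ^+ 2).
Proof. by move=> -> hk; field. Qed.

Lemma id2 (R : realType) (L s uv : R) : L != 0 -> s != 0 ->
  s ^+ 2 - uv ^+ 2 / L ^+ 2 = s ^+ 2 * (1 - (uv / (L * s)) ^+ 2).
Proof. by move=> hL hs; field; rewrite hL hs. Qed.

Lemma hr_lemma (R : realType) (L k e : R) : 0 <= L -> 0 < k -> k <= 1 -> e = 2 * k ->
  L / 2 <= L / e.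
Proof.
move=> hL k0 k1 ->; rewrite ler_pdivlMr ?mulr_gt0 //.
have -> : L / 2 * (2 * k) = L * k by field.
by rewrite -[X in _ <= X](mulr1 L) ler_wpM2l.
Qed.

Lemma alg_step (R : realType) (k L s uv Sk S : R) : 0 < k -> 0 < L -> 0 < s ->
  uv + 2 * (L / (2 * k) * Sk) * (s * S) < s ^+ 2 ->
  k * (uv / (L * s)) + Sk * S < k * (s / L).
Proof.
move=> k0 L0 s0 h.
have e : k * (uv / (L * s)) + Sk * S - k * (s / L) =
    - (k / (L * s) * (s ^+ 2 - (uv + 2 * (L / (2 * k) * Sk) * (s * S)))).
  by field; rewrite !gt_eqF.
rewrite -subr_lt0 e oppr_lt0; apply: mulr_gt0; last by rewrite subr_gt0.
by apply: divr_gt0 => //; exact: mulr_gt0.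
Qed.

Arguments kbounds {R eps q}.
Arguments id1 {R} L {k e}.
Arguments id2 {R L s} uv.
Arguments alg_step {R k L s uv Sk S}.

Theorem lemma3p13 (R : realType) (d : nat) (hd : (2 <= d)%N) (eps : R)
  (a b c : 'rV[R]_d)
  (heps0 : 0 < eps) (heps1 : eps <= 66%:R / 100%:R)
  (hab : a != b) (hbc : b != c) (hac : a != c)
  (hcomp : compatible eps a b c)
  (hratio : (6231%:R / 10000%:R) * (dist c b / dist a b) <= 1) :
  deg (5145%:R / 100%:R) + acos ((6231%:R / 10000%:R) * (dist c b / dist a b))
    < angle_rad a b c
  /\ deg (1029%:R / 10%:R) < angle_rad a b c.
Proof.
have hcb : c != b by rewrite eq_sym.
have hL := @dist_gt0 R d a b hab; have hs := @dist_gt0 R d c b hcb.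
have q0 : 0 < Num.sqrt (4 - eps ^+ 2).
  rewrite sqrtr_gt0 subr_gt0; apply: (le_lt_trans (ler_pM (ltW heps0) (ltW heps0) heps1 heps1)).
  rewrite -expr2; lra.
have q2 : Num.sqrt (4 - eps ^+ 2) ^+ 2 = 4 - eps ^+ 2.
  by rewrite sqr_sqrtr // ltW // -sqrtr_gt0.
set q := Num.sqrt (4 - eps ^+ 2) in q0 q2 hcomp *.
have [k0 km kc k1] := kbounds heps0 heps1 q2 q0.
set k := eps * q / 2 in k0 km kc k1.
have er : eps * q = 2 * k by rewrite /k mulrC mulrA [2 * _]mulrC mulfK.
have kn0 : k != 0 by rewrite gt_eqF.
set L := dist a b in hL hratio *; set s := dist c b in hs hratio *.
have huu : dotp (a - b) (a - b) = L ^+ 2 by rewrite /L sqr_dist.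
have hvv : dotp (c - b) (c - b) = s ^+ 2 by rewrite /s sqr_dist.
have hvu : dotp (c - b) (a - b) = dotp (a - b) (c - b) by rewrite dotpC.
set uv := dotp (a - b) (c - b) in hvu *.
have cs := @cauchy_schwarz R d (a - b) (c - b).
rewrite -/uv huu hvv in cs.
have {}cs : uv ^+ 2 <= L ^+ 2 * s ^+ 2 by apply: cs; apply: exprn_gt0.
have hC2 : (uv / (L * s)) ^+ 2 <= 1.
  have hLs : 0 < (L * s) ^+ 2 by apply: exprn_gt0; exact: mulr_gt0.
  by rewrite expr_div_n ler_pdivrMr // mul1r exprMn.
have hC := @sq_le1 R _ hC2.
have hLn : L != 0 by rewrite gt_eqF.
have hsn : s != 0 by rewrite gt_eqF.
have k1' : k <= 1 by exact: ltW.
have hk2 : 0 <= 1 - k ^+ 2.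
  by rewrite subr_ge0 expr2; have := ler_pM (ltW k0) (ltW k0) k1' k1'; rewrite mulr1.
have hC2' : 0 <= 1 - (uv / (L * s)) ^+ 2 by rewrite subr_ge0.
have G1 : k * (uv / (L * s)) + Num.sqrt (1 - k ^+ 2) * Num.sqrt (1 - (uv / (L * s)) ^+ 2)
    < k * (s / L).
  have hr := @hr_lemma R L k (eps * q) (ltW hL) k0 k1' er.
  have H1 : forall x, dist x a = L / (eps * q) -> dist x b = L / (eps * q) ->
      L / (eps * q) < dist x c.
    move=> x h1 h2; have := hcomp.1 x (conj h1 h2); rewrite /cball /= -h2 => hn.
    by rewrite ltNge; apply/negP.
  have := @geomG R d hd a b c _ hab hr H1.
  rewrite -/L -/uv huu hvv (id1 L er kn0) (id2 uv hLn hsn).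
  rewrite !sqrt_sqM; last 2 first; first exact: ltW.
    by apply: divr_ge0; [exact: ltW| rewrite mulr_ge0 // ltW].
  exact: alg_step.
have G2 : k * (uv / (L * s)) + Num.sqrt (1 - k ^+ 2) * Num.sqrt (1 - (uv / (L * s)) ^+ 2)
    < k / (s / L).
  have hr := @hr_lemma R s k (eps * q) (ltW hs) k0 k1' er.
  have H2 : forall y, dist y c = s / (eps * q) -> dist y b = s / (eps * q) ->
      s / (eps * q) < dist y a.
    move=> y h1 h2.
    have hX : Xset eps b c y by split; rewrite (@distC R d b c) -/s; [exact: h2|exact: h1].
    have := hcomp.2 y hX; rewrite /cball /= -h2 => hn.
    by rewrite ltNge; apply/negP.
  have := @geomG R d hd c b a _ hcb hr H2.
  rewrite -/s hvu huu hvv (id1 s er kn0) (id2 uv hsn hLn).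
  rewrite !sqrt_sqM; last 2 first; first exact: ltW.
    by apply: divr_ge0; [exact: ltW| rewrite mulr_ge0 // ltW].
  move=> h; have := alg_step k0 hs hL h.
  by rewrite [s * L]mulrC invf_div.
rewrite /angle_rad -/L -/s -/uv.
apply: trig_final; [exact: hC|exact: divr_gt0|exact: k0|exact: km|exact: kc|exact: hratio|exact: G1|exact: G2].
Qed.
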